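(* Let $\mathfrak{g}=(V,[\,,])$ be a $2$-step nilpotent Lie algebra over $K$ and let $x\cdot y$ be a pre-Lie algebra structure on $\mathfrak{g}$. Then $x\circ y=\frac12(x\cdot y+y\cdot x)$ defines a CPA-structure on $\mathfrak{g}$ if and only if every left multiplication $L(x)$, $L(x)(y)=x\cdot y$, is a derivation of $\mathfrak{g}$. If in this situation (all $L(x)$ derivations) moreover $Z(\mathfrak{g})\subseteq[\mathfrak{g},\mathfrak{g}]$, then all $L(x)$ are nilpotent.
   Context: $K$ is a field of characteristic zero and $V$ a finite-dimensional $K$-vector space. A pre-Lie algebra structure on a Lie algebra $\mathfrak{g}=(V,[\,,])$ is a bilinear product $x\cdot y$ on $V$ with $x\cdot y-y\cdot x=[x,y]$ and $[x,y]\cdot z=x\cdot(y\cdot z)-y\cdot(x\cdot z)$ for all $x,y,z$. A commutative post-Lie algebra structure (CPA-structure) on a Lie algebra $(V,[\,,])$ is a bilinear product $x\circ y$ on $V$ with $x\circ y=y\circ x$, $[x,y]\circ z=x\circ(y\circ z)-y\circ(x\circ z)$, and $x\circ[y,z]=[x\circ y,z]+[y,x\circ z]$ for all $x,y,z$. A Lie algebra is called $2$-step nilpotent here if it is nilpotent of class at most $2$, i.e. all brackets $[[x,y],z]$ vanish. $Z(\mathfrak{g})$ denotes the center. *)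

(* Defs.v *)
From HB Require Import structures.
From mathcomp Require Import all_boot all_order all_algebra.
Set Implicit Arguments. Unset Strict Implicit. Unset Printing Implicit Defensive.
Import GRing.Theory.
Local Open Scope ring_scope.

Section Defs.
Variables (K : fieldType) (V : vectType K).

Definition bilinearP (m : V -> V -> V) : Prop :=
  (forall (a : K) x y z, m (a *: x + y) z = a *: m x z + m y z) /\
  (forall (a : K) x y z, m x (a *: y + z) = a *: m x y + m x z).

Definition is_Lie (br : V -> V -> V) : Prop :=
  [/\ bilinearP br, (forall x, br x x = 0) &
      (forall x y z, br x (br y z) + br y (br z x) + br z (br x y) = 0)].

Definition two_step_nilpotent (br : V -> V -> V) : Prop :=
  forall x y z, br (br x y) z = 0.

Definition is_preLie_on (br : V -> V -> V) (pr : V -> V -> V) : Prop :=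
  [/\ bilinearP pr,
      (forall x y, pr x y - pr y x = br x y) &
      (forall x y z, pr (br x y) z = pr x (pr y z) - pr y (pr x z))].

Definition is_CPA (br : V -> V -> V) (c : V -> V -> V) : Prop :=
  [/\ bilinearP c,
      (forall x y, c x y = c y x),
      (forall x y z, c (br x y) z = c x (c y z) - c y (c x z)) &
      (forall x y z, c x (br y z) = br (c x y) z + br y (c x z))].

Definition is_derivation (br : V -> V -> V) (D : V -> V) : Prop :=
  forall y z, D (br y z) = br (D y) z + br y (D z).

Definition in_center (br : V -> V -> V) (z : V) : Prop :=
  forall x, br z x = 0.

Definition in_derived (br : V -> V -> V) (z : V) : Prop :=
  exists s : seq (V * V), z = \sum_(p <- s) br p.1 p.2.

Definition nilpotent_map (f : V -> V) : Prop :=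
  exists n : nat, forall y, iter n f y = 0.

End Defs.

(* Main.v *)
Require Import Defs.
From HB Require Import structures.
From mathcomp Require Import all_boot all_order all_algebra.
From mathcomp Require Import ring.
From Stdlib Require Import FunctionalExtensionality.
Import GRing.Theory.
Local Open Scope ring_scope.

Section Lin.
Variables (K : fieldType) (V : vectType K) (f : V -> V).
Hypothesis hf : forall (a : K) x y, f (a *: x + y) = a *: f x + f y.
Lemma linD x y : f (x + y) = f x + f y.
Proof. by move: (hf 1 x y); rewrite !scale1r. Qed.
Lemma lin0 : f 0 = 0.
Proof. by apply: (addrI (f 0)); rewrite -linD !addr0. Qed.
Lemma linZ a x : f (a *: x) = a *: f x.
Proof. by rewrite -[a *: x]addr0 hf lin0 addr0. Qed.
Lemma linN x : f (- x) = - f x.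
Proof. by rewrite -scaleN1r linZ scaleN1r. Qed.
Lemma linB x y : f (x - y) = f x - f y.
Proof. by rewrite linD linN. Qed.
Lemma lin_sum (I : Type) (s : seq I) (F : I -> V) :
  f (\sum_(i <- s) F i) = \sum_(i <- s) f (F i).
Proof. elim: s => [|i s IH]; first by rewrite !big_nil lin0.
by rewrite !big_cons linD IH. Qed.
Lemma lin_iter n : forall (a : K) x y, iter n f (a *: x + y) = a *: iter n f x + iter n f y.
Proof. elim: n => [//|n IH] a x y /=. by rewrite IH hf. Qed.
End Lin.
Arguments linD {K V f} hf x y.
Arguments lin0 {K V f} hf.
Arguments linZ {K V f} hf a x.
Arguments linN {K V f} hf x.
Arguments linB {K V f} hf x y.
Arguments lin_sum {K V f} hf {I} s F.
Arguments lin_iter {K V f} hf n a x y.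

Section Stab.
Variables (K : fieldType) (V : vectType K) (f : V -> V).
Hypothesis hf : forall (a : K) x y, f (a *: x + y) = a *: f x + f y.

Definition fl := f.
HB.instance Definition _ := GRing.isLinear.Build K V V *:%R fl hf.
Let F : 'End(V) := linfun fl.
Let FE u : F u = f u. Proof. by rewrite /F lfunE. Qed.
Let U k := iter k (fun W : {vspace V} => (F @: W)%VS) fullv.

Let memU k w : reflect (exists y, w = iter k f y) (w \in U k).
Proof.
elim: k w => [|k IH] w /=.
  by rewrite memvf; apply: ReflectT; exists w.
apply: (iffP memv_imgP) => [[u /IH [y ->] ->]|[y ->]].
  by exists y; rewrite FE.
exists (iter k f y); first by apply/IH; exists y.
by rewrite FE.
Qed.

Let Udec k : (U k.+1 <= U k)%VS.
Proof.
elim: k => [|k IH]; first exact: subvf.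
exact: limgS.
Qed.

Let dimU k : (forall j, (j < k)%N -> U j.+1 != U j) -> (\dim (U k) + k <= \dim (fullv : {vspace V}))%N.
Proof.
elim: k => [|k IH] H; first by rewrite addn0.
have H1 := H k (ltnSn k).
have H2 : (\dim (U k.+1) < \dim (U k))%N.
  rewrite ltnNge; apply: contra H1 => hd; rewrite eqEdim Udec.
  by [].
have := IH (fun j hj => H j (ltnW hj)).
rewrite addnS. move=> h; apply: leq_trans h; by rewrite ltn_add2r.
Qed.

Lemma stab : exists j, forall i y, exists v, iter j f y = iter (i + j) f v.
Proof.
set N := (\dim (fullv : {vspace V})).+1.
have [/existsP [j /eqP hj]|hn] := boolP [exists j : 'I_N, U (nat_of_ord j).+1 == U j].
  have hst : forall i, U (i + j) = U j.
    elim=> [//|i IH]; rewrite addSn /=.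
    by rewrite IH -[X in (F @: X)%VS]/(U j).
  exists j => i y.
  have : iter j f y \in U (i + j) by rewrite hst; apply/memU; exists y.
  by case/memU => v ->; exists v.
exfalso; move/existsPn: hn => hn.
have := @dimU N (fun j hj => hn (Ordinal hj)).
by rewrite /N addnS ltnNge leq_addl.
Qed.
End Stab.
Arguments stab {K V f} hf.

Section Main.
Variables (K : fieldType) (V : vectType K) (br pr : V -> V -> V).
Hypothesis hLie : is_Lie br.
Hypothesis h2 : two_step_nilpotent br.
Hypothesis hpre : is_preLie_on br pr.

Let bl z : forall (a : K) x y, br (a *: x + y) z = a *: br x z + br y z.
Proof. by case: hLie => [[h _] _ _]. Qed.
Let brr x : forall (a : K) y z, br x (a *: y + z) = a *: br x y + br x z.
Proof. by case: hLie => [[_ h] _ _]. Qed.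
Let pl z : forall (a : K) x y, pr (a *: x + y) z = a *: pr x z + pr y z.
Proof. by case: hpre => [[h _] _ _]. Qed.
Let prr x : forall (a : K) y z, pr x (a *: y + z) = a *: pr x y + pr x z.
Proof. by case: hpre => [[_ h] _ _]. Qed.

Lemma brNl x z : br (- x) z = - br x z. Proof. exact: linN (bl z) x. Qed.
Lemma brDl x y z : br (x + y) z = br x z + br y z. Proof. exact: linD (bl z) x y. Qed.
Lemma brBl x y z : br (x - y) z = br x z - br y z. Proof. exact: linB (bl z) x y. Qed.
Lemma brZl a x z : br (a *: x) z = a *: br x z. Proof. exact: linZ (bl z) a x. Qed.
Lemma br0l z : br 0 z = 0. Proof. exact: lin0 (bl z). Qed.
Lemma brDr x y z : br x (y + z) = br x y + br x z. Proof. exact: linD (brr x) y z. Qed.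
Lemma brBr x y z : br x (y - z) = br x y - br x z. Proof. exact: linB (brr x) y z. Qed.
Lemma brZr a x z : br x (a *: z) = a *: br x z. Proof. exact: linZ (brr x) a z. Qed.
Lemma br0r z : br z 0 = 0. Proof. exact: lin0 (brr z). Qed.
Lemma prDl x y z : pr (x + y) z = pr x z + pr y z. Proof. exact: linD (pl z) x y. Qed.
Lemma prBl x y z : pr (x - y) z = pr x z - pr y z. Proof. exact: linB (pl z) x y. Qed.
Lemma prZl a x z : pr (a *: x) z = a *: pr x z. Proof. exact: linZ (pl z) a x. Qed.
Lemma pr0l z : pr 0 z = 0. Proof. exact: lin0 (pl z). Qed.
Lemma prDr x y z : pr x (y + z) = pr x y + pr x z. Proof. exact: linD (prr x) y z. Qed.
Lemma prBr x y z : pr x (y - z) = pr x y - pr x z. Proof. exact: linB (prr x) y z. Qed.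
Lemma prZr a x z : pr x (a *: z) = a *: pr x z. Proof. exact: linZ (prr x) a z. Qed.
Lemma pr0r z : pr z 0 = 0. Proof. exact: lin0 (prr z). Qed.

Lemma brxx x : br x x = 0. Proof. by case: hLie. Qed.

Lemma brA x y : br y x = - br x y.
Proof.
have := brxx (x + y); rewrite brDl !brDr !brxx add0r addr0 => /eqP.
by rewrite addr_eq0 => /eqP ->; rewrite opprK.
Qed.

Lemma brC0 x y z : br x (br y z) = 0.
Proof. by rewrite brA h2 oppr0. Qed.

Lemma prC x y : pr x y = pr y x + br x y.
Proof. by case: hpre => _ h _; rewrite -(h x y) addrC subrK. Qed.

Lemma preL x y z : pr (br x y) z = pr x (pr y z) - pr y (pr x z).
Proof. by case: hpre. Qed.

Hypothesis two_ne0 : (2 : K) != 0.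
Let k : K := 2^-1.
Lemma kk : k + k = 1.
Proof. rewrite /k; field. exact: two_ne0. Qed.

Lemma kmix (a b : V) : k *: (a + b) = a - k *: (a - b).
Proof.
have h : a = k *: a + k *: a by rewrite -scalerDl kk scale1r.
rewrite {2}h scalerDr scalerBr opprB addrA addrAC addrK.
by [].
Qed.

Lemma c_eq : (fun x y => 2^-1 *: (pr x y + pr y x)) = (fun x y => pr x y - k *: br x y).
Proof.
apply: functional_extensionality => x; apply: functional_extensionality => y.
have -> : br x y = pr x y - pr y x by case: hpre.
exact: kmix.
Qed.

Lemma c4 x y z :
  (pr x (br y z) - k *: br x (br y z) = br (pr x y - k *: br x y) z + br y (pr x z - k *: br x z))
  <-> (pr x (br y z) = br (pr x y) z + br y (pr x z)).
Proof.
by rewrite brC0 brBl brZl h2 brBr brZr brC0 !scaler0 !subr0.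
Qed.

Lemma part1 : is_CPA br (fun x y => 2^-1 *: (pr x y + pr y x)) <->
     (forall x, is_derivation br (pr x)).
Proof.
rewrite c_eq; split.
  by case=> _ _ _ h x y z; apply/c4; apply: h.
move=> hd; split.
- split=> a x y z.
    by rewrite pl bl !scalerDr !scalerN !scalerA [k * a]mulrC opprD addrACA.
  by rewrite prr brr !scalerDr !scalerN !scalerA [k * a]mulrC opprD addrACA.
- move=> x y; rewrite [pr x y]prC [br y x]brA scalerN opprK -addrA; congr (_ + _).
  by rewrite -{1}[br x y]scale1r -kk scalerDl addrK.
- move=> x y z; rewrite h2 scaler0 subr0 preL.
  rewrite !prBr !prZr !brBr !brZr !brC0 !scaler0 !subr0 !hd.
  rewrite [pr x y]prC brDl h2 addr0 [pr y x]prC brDl h2 addr0.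
  set A := pr x (pr y z); set B := pr y (pr x z).
  set P := br (pr y x) z; set Q1 := br x (pr y z); set Q2 := br y (pr x z).
  have e : forall (A u v : V), A - k *: u - k *: v = A - k *: (u + v).
    by move=> *; rewrite scalerDr opprD addrA.
  rewrite !e [_ + Q2 + Q1]addrAC.
  by rewrite opprB addrA subrK.
- by move=> x y z; apply/c4; apply: hd.
Qed.


Local Notation cen := (in_center br).
Definition eqZ u v := cen (u - v).

Hypothesis hd : forall x, is_derivation br (pr x).
Hypothesis hZ : forall z, cen z -> in_derived br z.

Lemma cen0 : cen 0. Proof. by move=> y; rewrite br0l. Qed.
Lemma cenD u v : cen u -> cen v -> cen (u + v).
Proof. by move=> hu hv y; rewrite brDl hu hv addr0. Qed.
Lemma cenB u v : cen u -> cen v -> cen (u - v).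
Proof. by move=> hu hv y; rewrite brBl hu hv subr0. Qed.
Lemma cen_br a b : cen (br a b). Proof. by move=> y; apply: h2. Qed.
Lemma cen_r w y : cen w -> br y w = 0.
Proof. by move=> hw; rewrite brA hw oppr0. Qed.
Lemma cen_prr y w : cen w -> cen (pr y w).
Proof.
move=> hw v; have := hd y w v.
by rewrite hw pr0r hw addr0 => <-.
Qed.
Lemma cen_prl w y : cen w -> cen (pr w y).
Proof. by move=> hw; rewrite prC hw addr0; apply: cen_prr. Qed.

Lemma prZZ w w' : cen w -> cen w' -> pr w w' = 0.
Proof.
move=> hw hw'; case: (hZ _ hw') => s ->.
rewrite (lin_sum (prr w)); apply: big1 => p _.
by rewrite hd (cen_prl _ _ hw) (cen_r _ _ (cen_prl _ _ hw)) addr0.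
Qed.

Lemma D3 a b w : cen w -> pr a (pr b w) = pr (pr a b) w.
Proof.
move=> hw; have := preL a w b.
rewrite (cen_r _ _ hw) pr0l => /esym /eqP; rewrite subr_eq0 => /eqP e.
by rewrite (prC b w) (cen_r _ _ hw) addr0 e (prC w (pr a b)) hw addr0.
Qed.

Lemma eqZ_refl u : eqZ u u. Proof. by rewrite /eqZ subrr; exact: cen0. Qed.
Lemma eqZ_sym u v : eqZ u v -> eqZ v u.
Proof. by rewrite /eqZ => h y; rewrite -opprB (linN (bl y)) h oppr0. Qed.
Lemma eqZ_trans u v w : eqZ u v -> eqZ v w -> eqZ u w.
Proof.
rewrite /eqZ => h1 h2'; have -> : u - w = (u - v) + (v - w) by rewrite addrA subrK.
exact: cenD.
Qed.
Lemma eqZ_cen u w : eqZ u w -> cen w -> cen u.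
Proof. by rewrite /eqZ => h hw; rewrite -(subrK w u); apply: cenD. Qed.
Lemma eqZ_pr_r y u v : eqZ u v -> eqZ (pr y u) (pr y v).
Proof. by rewrite /eqZ -prBr; apply: cen_prr. Qed.
Lemma eqZ_pr_l y u v : eqZ u v -> eqZ (pr u y) (pr v y).
Proof. by rewrite /eqZ -prBl; apply: cen_prl. Qed.
Lemma eqZ_br u v y : eqZ u v -> br u y = br v y.
Proof. by move=> h; apply/eqP; rewrite -subr_eq0 -brBl h. Qed.
Lemma eqZ_C u a : eqZ (pr u a) (pr a u).
Proof. by rewrite /eqZ (prC u a) addrAC subrr add0r; apply: cen_br. Qed.
Lemma eqZ_iter x n u v : eqZ u v -> eqZ (iter n (pr x) u) (iter n (pr x) v).
Proof. by elim: n => [//|n IH] h /=; apply: eqZ_pr_r; apply: IH. Qed.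

Arguments eqZ_trans {u v w}.
Arguments eqZ_sym {u v}.
Arguments eqZ_cen {u w}.
Arguments eqZ_pr_r y {u v}.
Arguments eqZ_pr_l y {u v}.
Arguments eqZ_br {u v} y.
Arguments eqZ_iter x n {u v}.

Lemma assoc x z a : eqZ (pr (pr x z) a) (pr x (pr z a)).
Proof.
apply: (eqZ_trans (eqZ_C _ _)).
apply: (@eqZ_trans _ (pr x (pr a z))).
  by rewrite /eqZ -preL; apply: cen_prl; apply: cen_br.
by apply: eqZ_pr_r; apply: eqZ_C.
Qed.

Lemma D4 x a b : br (pr x a) (pr x b) = 0.
Proof.
have := D3 x x _ (cen_br a b).
rewrite !hd prDr !hd.
rewrite (eqZ_br _ (assoc x x a)) [br a (pr (pr x x) b)]brA (eqZ_br _ (assoc x x b)) -brA.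
set S1 := br (pr x (pr x a)) b; set S2 := br a (pr x (pr x b)); set T := br (pr x a) (pr x b).
move=> h.
have hT : T + T = 0.
  apply: (addrI S1); apply: (addIr S2); rewrite addr0 -h.
  by rewrite !addrA.
by rewrite -[T]scale1r -kk scalerDl -scalerDr hT scaler0.
Qed.

Lemma key e : cen (pr e e - e) -> cen e.
Proof.
move=> hz2; set z2 := pr e e - e.
have hee : pr e e = e + z2 by rewrite /z2 addrC subrK.
have step : forall f, cen (pr e f) -> br e f = 0.
  move=> f hf.
  have hz1 : cen (pr f e) by rewrite prC; apply: cenD => //; apply: cen_br.
  have hT : pr e (br e f) = br e f.
    by rewrite hd hee brDl hz2 addr0 (cen_r _ _ hf) addr0.
  have h := preL e f e.
  rewrite (prC (br e f) e) (h2 e f e) addr0 hT hee prDr in h.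
  rewrite -{1}hT h prBr prDr (D3 _ _ _ hz1) (D3 _ _ _ hz2) hee prDl.
  rewrite (prZZ _ _ hz2 hz1) [e + z2 - e]addrAC subrr add0r (prZZ _ _ hf hz2).
  by rewrite addr0 subrr.
move=> y.
rewrite -(subrK (pr e y) y) brDr -(eqZ_br (pr e y) hz2) D4 addr0.
apply: step; rewrite prBr.
apply: eqZ_sym; apply: (eqZ_trans (eqZ_sym (assoc e e y))).
rewrite hee prDl /eqZ addrAC subrr add0r; exact: cen_prl.
Qed.

Lemma Piter x n y a : eqZ (pr (iter n (pr x) y) a) (iter n (pr x) (pr y a)).
Proof.
elim: n => [|n IH] /=; first exact: eqZ_refl.
apply: (eqZ_trans (assoc _ _ _)); exact: eqZ_pr_r.
Qed.

Lemma Nil x : forall n i j a b, (i + j <= n)%N -> cen (iter i (pr x) a) ->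
  cen (iter j (pr x) b) -> iter n (pr x) (br a b) = 0.
Proof.
elim=> [|n IH] i j a b hij ha hb.
  move: hij; rewrite leqn0 addn_eq0 => /andP [/eqP hi _]; subst i.
  by rewrite /= ha.
have L0 := lin0 (lin_iter (prr x) n).
case: i hij ha => [|i] hij ha.
  have e : pr x (br a b) = 0.
    by rewrite hd (ha (pr x b)) addr0 (cen_prr _ _ ha b).
  by rewrite iterSr e L0.
case: j hij hb => [|j] hij hb.
  have e : pr x (br a b) = 0.
    by move: hb => /= hb; rewrite hd (cen_r _ _ hb) (cen_r _ _ (cen_prr x _ hb)) addr0.
  by rewrite iterSr e L0.
rewrite iterSr hd (linD (lin_iter (prr x) n)).
rewrite iterSr in ha; rewrite iterSr in hb.
rewrite (IH i j.+1 (pr x a) b) ?(IH i.+1 j a (pr x b)) ?addr0 //.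
all: try by move: hij; rewrite ?addnS ?addSn ltnS.
all: by rewrite iterSr.
Qed.

Lemma nilp x : nilpotent_map (pr x).
Proof.
have [n hn] := stab (prr x).
have [v hv] := hn n.+2 x.
set m := n.+1.
have hmm : (n.+2 + n = m + m)%N by rewrite /m addSn addnS.
rewrite hmm in hv.
set e := iter m (pr x) v.
have E2 : forall a, eqZ (pr e (iter m (pr x) a)) (iter m (pr x) a).
  move=> a.
  apply: (eqZ_trans (Piter x m v _)).
  apply: (eqZ_trans (eqZ_iter x m (eqZ_C _ _))).
  apply: (eqZ_trans (eqZ_iter x m (Piter x m a v))).
  apply: (eqZ_trans (eqZ_iter x m (eqZ_iter x m (eqZ_C a v)))).
  rewrite -iterD.
  apply: (eqZ_trans (eqZ_sym (Piter x (m+m) v a))).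
  rewrite -hv.
  apply: (eqZ_trans (Piter x n x a)).
  rewrite -iterSr; exact: eqZ_refl.
have ce : cen e := key _ (E2 v).
have hc : forall a, cen (iter m (pr x) a).
  move=> a; apply: (eqZ_cen (eqZ_sym (E2 a))); exact: cen_prl.
exists (m + m + m) => y.
rewrite iterD; case: (hZ _ (hc y)) => s ->.
rewrite (lin_sum (lin_iter (prr x) (m + m))); apply: big1 => p _.
by apply: (Nil x _ m m) => //; apply: hc.
Qed.
End Main.

Theorem mainTheorem6 (K : fieldType) (V : vectType K)
  (hchar : [pchar K] =i pred0)
  (br : V -> V -> V) (pr : V -> V -> V)
  (hLie : is_Lie br) (h2 : two_step_nilpotent br)
  (hpre : is_preLie_on br pr) :
  (is_CPA br (fun x y => 2^-1 *: (pr x y + pr y x)) <->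
     (forall x, is_derivation br (pr x))) /\
  ((forall x, is_derivation br (pr x)) ->
     (forall z, in_center br z -> in_derived br z) ->
     forall x, nilpotent_map (pr x)).
Proof.
have two : (2 : K) != 0.
  apply/negP => h; have [p hp] := natf0_pchar (isT : (0 < 2)%N) h.
  by rewrite hchar in hp.
split; first exact: (part1 _ _ _ _ hLie h2 hpre two).
by move=> hd hZ x; exact: (nilp _ _ _ _ hLie h2 hpre two hd hZ).
Qed.
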